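(* Let $\{A^i\}_{i=1}^N$ and $\{\tilde A^i\}_{i=1}^N$ be injective fMPSs of bond dimension $2n$ with Wall invariant $(+)$, both in canonical form. Then $\{A^i\}_i \sim \{\tilde A^i\}_i$ holds if and only if there exist a unitary matrix $V\in \mathrm{U}(2n)$ and a phase $e^{i\beta}\in \mathrm{U}(1)$ such that $$\tilde A^i = e^{i\beta} V^\dagger A^i V \quad \text{for all } i.$$ In this case $e^{i\beta}$ is unique and $V$ is unique up to multiplication by a $\mathrm{U}(1)$ phase. Moreover, if $u$ and $\tilde u$ are Wall matrices of $\{A^i\}_i$ and $\{\tilde A^i\}_i$ respectively, then $\tilde u = \eta\, V^\dagger u V$ for some sign $\eta\in\{\pm1\}$. All of these statements remain true if the hypothesis $\{A^i\}_i\sim\{\tilde A^i\}_i$ is replaced by $\{A^i\}_i\sim_{\rm PBC}\{\tilde A^i\}_i$.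
   Context: Fix integers $N,n\ge 1$ and a parity function $i\mapsto |i|\in\{0,1\}$ on $\{1,\dots,N\}$. Let $\sigma_x,\sigma_z$ be the Pauli matrices. An fMPS of bond dimension $2n$ is a tuple $\{A^i\}_{i=1}^N$ of complex $2n\times 2n$ matrices for which there is a matrix $Z$ (a grading matrix), unitarily equivalent to $\sigma_z\otimes 1_n$, with $(-1)^{|i|}A^i = Z A^i Z$ for all $i$. It is in canonical form if $\sum_i A^iA^{i\dagger}=1_{2n}$. It is injective with Wall invariant $(+)$ if there is a fixed $l\in\mathbb N$ such that the products $A^{i_1}\cdots A^{i_l}$ over all $(i_1,\dots,i_l)$ span $\mathrm M_{2n}(\mathbb C)$; in that case the grading matrix is unique up to sign and a Wall matrix is $u=\pm Z$ (so $u^2=1$). Two fMPSs are gauge equivalent, $\{A^i\}_i\sim\{\tilde A^i\}_i$, if for every $L\in\mathbb N$ there is $\alpha_L\in\mathbb R$ with $\mathrm{tr}[A^{i_1}\cdots A^{i_L}] = e^{i\alpha_L}\mathrm{tr}[\tilde A^{i_1}\cdots\tilde A^{i_L}]$ for all $i_1,\dots,i_L$. They are gauge equivalent in PBC, $\{A^i\}_i\sim_{\rm PBC}\{\tilde A^i\}_i$, if for every $L$ there is $\alpha_L$ with $\mathrm{tr}[uA^{i_1}\cdots A^{i_L}] = e^{i\alpha_L}\mathrm{tr}[\tilde u\tilde A^{i_1}\cdots\tilde A^{i_L}]$ for all $i_1,\dots,i_L$, where $u,\tilde u$ are the respective Wall matrices. *)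

(* Defs.v *)
From HB Require Import structures.
From mathcomp Require Import all_boot all_order all_algebra.
From mathcomp Require Import spectral sesquilinear.
From mathcomp Require Import complex.
From mathcomp Require Import reals.
Set Implicit Arguments.
Unset Strict Implicit.
Unset Printing Implicit Defensive.
Import Order.TTheory GRing.Theory Num.Theory.
Local Open Scope ring_scope.
Local Open Scope sesquilinear_scope.

Section FMPS.
Variable C : numClosedFieldType.
(* bond dimension 2n is written n + n *)
Variables (n N : nat).
(* the parity function i |-> |i|, true = odd; sites are indexed by 'I_N *)
Variable par : 'I_N -> bool.

Definition sigmaz_id : 'M[C]_(n + n) := block_mx 1%:M 0 0 (- 1%:M).

Definition grading_like (Z : 'M[C]_(n + n)) : Prop :=
  exists W : 'M[C]_(n + n), W \is unitarymx /\ Z = W *m sigmaz_id *m W^t*.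

Definition is_grading (A : 'I_N -> 'M[C]_(n + n)) (Z : 'M[C]_(n + n)) : Prop :=
  grading_like Z /\ forall i, (-1) ^+ par i *: A i = Z *m A i *m Z.

Definition is_fMPS (A : 'I_N -> 'M[C]_(n + n)) : Prop :=
  exists Z, is_grading A Z.

Definition canonical_fMPS (A : 'I_N -> 'M[C]_(n + n)) : Prop :=
  \sum_i A i *m (A i)^t* = 1%:M.

Definition wprod (A : 'I_N -> 'M[C]_(n + n)) (w : seq 'I_N) : 'M[C]_(n + n) :=
  foldr (fun i M => A i *m M) 1%:M w.

Definition injective_plus (A : 'I_N -> 'M[C]_(n + n)) : Prop :=
  exists l : nat, forall M : 'M[C]_(n + n),
    exists c : l.-tuple 'I_N -> C, M = \sum_(w : l.-tuple 'I_N) c w *: wprod A w.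

Definition is_wall (A : 'I_N -> 'M[C]_(n + n)) (u : 'M[C]_(n + n)) : Prop :=
  exists Z, is_grading A Z /\ (u = Z \/ u = - Z).

(* e^{i alpha} with alpha real ranges exactly over the unit-modulus scalars *)
Definition gauge_equiv (A At : 'I_N -> 'M[C]_(n + n)) : Prop :=
  forall L : nat, exists ph : C, `|ph| = 1 /\
    forall w : L.-tuple 'I_N, \tr (wprod A w) = ph * \tr (wprod At w).

Definition gauge_equiv_PBC (A At : 'I_N -> 'M[C]_(n + n)) : Prop :=
  exists u ut, is_wall A u /\ is_wall At ut /\
  forall L : nat, exists ph : C, `|ph| = 1 /\
    forall w : L.-tuple 'I_N, \tr (u *m wprod A w) = ph * \tr (ut *m wprod At w).

Definition unit_related (A At : 'I_N -> 'M[C]_(n + n))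
  (V : 'M[C]_(n + n)) (b : C) : Prop :=
  V \is unitarymx /\ `|b| = 1 /\ forall i, At i = b *: (V^t* *m A i *m V).

End FMPS.

(* Main.v *)
Require Import Defs.
From HB Require Import structures.
From mathcomp Require Import all_boot all_order all_algebra.
From mathcomp Require Import spectral sesquilinear complex reals.
From Stdlib Require ClassicalEpsilon Classical.
Set Implicit Arguments.
Unset Strict Implicit.
Unset Printing Implicit Defensive.
Import Order.TTheory GRing.Theory Num.Theory.
Local Open Scope ring_scope.
Local Open Scope sesquilinear_scope.

Section Gen.
Variable C : numClosedFieldType.
Variables (m N : nat).
Implicit Types (A : 'I_N -> 'M[C]_m) (s t : seq (C * seq 'I_N)).

Definition wp A (w : seq 'I_N) : 'M[C]_m := foldr (fun i M => A i *m M) 1%:M w.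
Definition lc A s : 'M[C]_m := \sum_(p <- s) p.1 *: wp A p.2.
Definition wl (L : nat) s := all (fun p : C * seq 'I_N => size p.2 == L) s.
Definition spanL A L := forall M : 'M[C]_m, exists s, wl L s /\ lc A s = M.
Definition prods s t := [seq (p.1 * q.1, p.2 ++ q.2) | p <- s, q <- t].
Definition scl (x : C) s := [seq (x * p.1, p.2) | p <- s].

Lemma wp_cat A w1 w2 : wp A (w1 ++ w2) = wp A w1 *m wp A w2.
Proof. by elim: w1 => [|i w IH] /=; rewrite ?mul1mx // IH mulmxA. Qed.

Lemma lc_cat A s t : lc A (s ++ t) = lc A s + lc A t.
Proof. by rewrite /lc big_cat. Qed.

Lemma lc_nil A : lc A [::] = 0.
Proof. by rewrite /lc big_nil. Qed.

Lemma lc_scl A x s : lc A (scl x s) = x *: lc A s.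
Proof. by rewrite /lc big_map scaler_sumr; apply: eq_bigr => p _ /=; rewrite scalerA. Qed.

Lemma lc_prods A s t : lc A (prods s t) = lc A s *m lc A t.
Proof.
rewrite /lc /prods big_allpairs_dep mulmx_suml; apply: eq_bigr => p _.
rewrite mulmx_sumr; apply: eq_bigr => q _ /=.
by rewrite wp_cat -scalemxAl -scalemxAr scalerA.
Qed.

Lemma wl_cat L s t : wl L (s ++ t) = wl L s && wl L t.
Proof. by rewrite /wl all_cat. Qed.

Lemma wl_scl L x s : wl L (scl x s) = wl L s.
Proof. by rewrite /wl /scl all_map. Qed.

Lemma wl_prods L1 L2 s t : wl L1 s -> wl L2 t -> wl (L1 + L2) (prods s t).
Proof.
move=> /allP Hs /allP Ht; apply/allP => r /allpairsP [[p q] [/= ps qt ->]] /=.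
by rewrite size_cat (eqP (Hs _ ps)) (eqP (Ht _ qt)).
Qed.

Lemma tr_lc A (u : 'M[C]_m) s :
  \tr (u *m lc A s) = \sum_(p <- s) p.1 * \tr (u *m wp A p.2).
Proof.
rewrite /lc mulmx_sumr raddf_sum; apply: eq_bigr => p _.
rewrite -scalemxAr; exact: mxtraceZ.
Qed.

Lemma nondeg (X : 'M[C]_m) : (forall M, \tr (X *m M) = 0) -> X = 0.
Proof.
move=> H; apply/matrixP => i j; rewrite mxE.
have := H (delta_mx j i); rewrite /mxtrace (bigD1 i) //= big1 ?addr0.
  by rewrite mxE (bigD1 j) //= !mxE !eqxx mulr1 big1 ?addr0 // => k /negbTE kj; rewrite !mxE kj mulr0.
move=> k ki; rewrite mxE big1 // => l _; rewrite !mxE (negbTE ki) andbF mulr0 //.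
Qed.

Lemma span_closed A L (F : 'I_N -> 'M[C]_m) :
  (forall i, exists s, wl L s /\ lc A s = F i) ->
  exists s, wl L s /\ lc A s = \sum_i F i.
Proof.
move=> H; apply: (big_ind (fun M => exists s, wl L s /\ lc A s = M)).
- by exists [::]; rewrite lc_nil.
- move=> x y [s [Hs <-]] [t [Ht <-]]; exists (s ++ t).
  by rewrite wl_cat Hs Ht lc_cat.
- by move=> i _; exact: H.
Qed.

Definition consw (i : 'I_N) s := [seq (p.1, i :: p.2) | p <- s].

Lemma lc_consw A i s : lc A (consw i s) = A i *m lc A s.
Proof.
rewrite /lc big_map mulmx_sumr; apply: eq_bigr => p _ /=.
by rewrite scalemxAr.
Qed.

Lemma wl_consw L i s : wl L s -> wl L.+1 (consw i s).
Proof. by move=> /allP H; apply/allP => r /mapP [p ps ->] /=; rewrite eqSS H. Qed.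

Lemma span_step A L : \sum_i A i *m (A i)^t* = 1%:M -> spanL A L -> spanL A L.+1.
Proof.
move=> Hc Hs M.
have -> : M = \sum_i A i *m ((A i)^t* *m M).
  by rewrite -[LHS]mul1mx -Hc mulmx_suml; apply: eq_bigr => i _; rewrite mulmxA.
apply: span_closed => i; have [s [ws Es]] := Hs ((A i)^t* *m M).
by exists (consw i s); rewrite wl_consw // lc_consw Es.
Qed.

Lemma span_ge A l L : \sum_i A i *m (A i)^t* = 1%:M -> spanL A l -> (l <= L)%N -> spanL A L.
Proof.
move=> Hc Hs; elim: L => [|L IH]; first by rewrite leqn0 => /eqP <-.
rewrite leq_eqVlt => /orP [/eqP <- //|]; rewrite ltnS => /IH; exact: span_step.
Qed.


Lemma TL A At (u ut : 'M[C]_m) (ph : C) L :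
  (forall w, size w = L -> \tr (u *m wp A w) = ph * \tr (ut *m wp At w)) ->
  forall s, wl L s -> \tr (u *m lc A s) = ph * \tr (ut *m lc At s).
Proof.
move=> H s /allP ws; rewrite !tr_lc mulr_sumr; apply: eq_big_seq => p ps.
by rewrite H ?(eqP (ws _ ps)) // mulrCA.
Qed.

Lemma KL A At (u ut : 'M[C]_m) (ph : C) L K :
  ut *m ut = 1%:M -> spanL At K ->
  (forall w, size w = (L + K)%N -> \tr (ut *m wp At w) = ph * \tr (u *m wp A w)) ->
  forall s, wl L s -> lc A s = 0 -> lc At s = 0.
Proof.
move=> Hu Hsp H s ws H0.
suff : ut *m lc At s = 0 by move=> E; rewrite -[lc At s]mul1mx -Hu -mulmxA E mulmx0.
apply: nondeg => M; have [t [wt <-]] := Hsp M.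
rewrite -mulmxA -lc_prods (TL H) ?wl_prods // lc_prods H0 mul0mx mulmx0.
by rewrite mxtrace0 mulr0.
Qed.

Definition negs s := [seq (- p.1, p.2) | p <- s].
Lemma lc_negs A s : lc A (negs s) = - lc A s.
Proof. by rewrite /lc big_map -sumrN; apply: eq_bigr => p _ /=; rewrite scaleNr. Qed.
Lemma wl_negs L s : wl L (negs s) = wl L s.
Proof. by rewrite /wl /negs all_map. Qed.

Lemma phi_ex A At L : spanL A L ->
  (forall s, wl L s -> lc A s = 0 -> lc At s = 0) ->
  exists Phi : 'M[C]_m -> 'M[C]_m, forall s, wl L s -> Phi (lc A s) = lc At s.
Proof.
move=> Hsp HK.
exists (fun M => lc At (proj1_sig (ClassicalEpsilon.constructive_indefinite_description _ (Hsp M)))).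
move=> s ws; case: ClassicalEpsilon.constructive_indefinite_description => t [wt Et] /=.
apply/eqP; rewrite -subr_eq0 -lc_negs -lc_cat; apply/eqP; apply: HK.
  by rewrite wl_cat wl_negs wt ws.
by rewrite lc_cat lc_negs Et subrr.
Qed.

Lemma phi_lin A At L (Phi : 'M[C]_m -> 'M[C]_m) : spanL A L ->
  (forall s, wl L s -> Phi (lc A s) = lc At s) ->
  (forall x M1 M2, Phi (x *: M1 + M2) = x *: Phi M1 + Phi M2).
Proof.
move=> Hsp HP x M1 M2; have [s [ws <-]] := Hsp M1; have [t [wt <-]] := Hsp M2.
by rewrite -lc_scl -lc_cat !HP ?lc_cat ?lc_scl // wl_cat wl_scl ws wt.
Qed.

Lemma phi_sum (I : finType) (Phi : 'M[C]_m -> 'M[C]_m) (F : I -> 'M[C]_m) :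
  (forall x M1 M2, Phi (x *: M1 + M2) = x *: Phi M1 + Phi M2) ->
  Phi (\sum_i F i) = \sum_i Phi (F i).
Proof.
move=> Hl.
have P0 : Phi 0 = 0.
  have E := Hl 1 0 0; rewrite !scale1r !addr0 in E.
  by apply: (@addrI _ (Phi 0)); rewrite addr0 -E.
have PD : forall a b, Phi (a + b) = Phi a + Phi b.
  by move=> a b; have := Hl 1 a b; rewrite !scale1r.
exact: (big_morph Phi PD P0).
Qed.

Lemma phiZ (Phi : 'M[C]_m -> 'M[C]_m) :
  (forall x M1 M2, Phi (x *: M1 + M2) = x *: Phi M1 + Phi M2) ->
  forall x M, Phi (x *: M) = x *: Phi M.
Proof.
move=> Hl x M.
have P0 : Phi 0 = 0.
  have E := Hl 1 0 0; rewrite !scale1r !addr0 in E.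
  by apply: (@addrI _ (Phi 0)); rewrite addr0 -E.
by have := Hl x M 0; rewrite !addr0 P0 addr0.
Qed.


Lemma dl_entry m1 n1 p1 (B : 'M[C]_(m1, n1)) (r : 'I_p1) (p : 'I_m1) k l :
  (delta_mx r p *m B) k l = (k == r)%:R * B p l.
Proof.
rewrite mxE (bigD1 p) //= big1 ?addr0; first by rewrite mxE eqxx andbT.
by move=> j jp; rewrite mxE (negbTE jp) andbF mul0r.
Qed.

Lemma dr_entry m1 n1 p1 (B : 'M[C]_(m1, n1)) (q : 'I_n1) (s : 'I_p1) k l :
  (B *m delta_mx q s) k l = B k q * (l == s)%:R.
Proof.
rewrite mxE (bigD1 q) //= big1 ?addr0; first by rewrite mxE eqxx.
by move=> j jq; rewrite mxE (negbTE jq) mulr0.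
Qed.

Lemma dBd (B : 'M[C]_m) (r p q z : 'I_m) :
  delta_mx r p *m B *m delta_mx q z = B p q *: delta_mx r z.
Proof.
apply/matrixP => k l; rewrite dr_entry dl_entry !mxE.
by case: (k == r); case: (l == z); rewrite ?mulr0 ?mul0r ?mulr1 ?mul1r.
Qed.

Lemma comm_scalar (T : 'M[C]_m) (i0 : 'I_m) :
  (forall M, T *m M = M *m T) -> T = T i0 i0 *: 1%:M.
Proof.
move=> H; apply/matrixP => k l; rewrite !mxE.
have := congr1 (fun X : 'M[C]_m => X k i0) (H (delta_mx l i0)); simpl.
by rewrite dr_entry dl_entry eqxx mulr1 mulrC eq_sym.
Qed.


Lemma auto_inner (psi : 'M[C]_m -> 'M[C]_m) (c : C) (i0 : 'I_m) :
  (forall x M1 M2, psi (x *: M1 + M2) = x *: psi M1 + psi M2) ->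
  (forall Y, exists M, psi M = Y) ->
  (forall M1 M2, psi M1 *m psi M2 = c *: psi (M1 *m M2)) ->
  c != 0 -> psi 1%:M = c *: 1%:M ->
  exists X : 'M[C]_m, X \in unitmx /\ forall M, psi M *m X = c *: (X *m M).
Proof.
move=> Hl Hs Hm c0 H1.
have HZ := phiZ Hl.
have P0 : psi (delta_mx i0 i0) != 0.
  apply/negP => /eqP P0.
  have Hj0 : forall j, psi (delta_mx j i0) = 0.
    move=> j; have := Hm (delta_mx j i0) (delta_mx i0 i0).
    rewrite P0 mulmx0 mul_delta_mx => /esym/eqP; rewrite scaler_eq0 (negbTE c0) /=.
    by move/eqP.
  have Hjj : forall j, psi (delta_mx j j) = 0.
    move=> j; have := Hm (delta_mx j i0) (delta_mx i0 j).
    rewrite Hj0 mul0mx mul_delta_mx => /esym/eqP; rewrite scaler_eq0 (negbTE c0) /=.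
    by move/eqP.
  have : psi 1%:M = 0 by rewrite mx1_sum_delta (phi_sum _ Hl) big1.
  rewrite H1 => /eqP; rewrite scaler_eq0 (negbTE c0) /= => /eqP/matrixP/(_ i0 i0).
  by rewrite !mxE eqxx => /eqP; rewrite oner_eq0.
have [p [q Ppq]] : exists p q, psi (delta_mx i0 i0) p q != 0.
  case: (Classical_Prop.classic (exists p q, psi (delta_mx i0 i0) p q != 0)) => // Hn.
  exfalso; move/negP: P0; apply; apply/eqP/matrixP => p q; rewrite mxE.
  case: (eqVneq (psi (delta_mx i0 i0) p q) 0) => // h; exfalso; apply: Hn.
  by exists p, q.
pose X := \matrix_(r, j) psi (delta_mx j i0) r q.
have HX : forall M, psi M *m X = c *: (X *m M).
  move=> M; apply/matrixP => r j.
  have e1 : (psi M *m X) r j = (psi M *m psi (delta_mx j i0)) r q.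
    by rewrite !mxE; apply: eq_bigr => k _; rewrite mxE.
  rewrite e1 Hm.
  have e2 : M *m delta_mx j i0 = \sum_t M t j *: delta_mx t i0.
    apply/matrixP => k l; rewrite dr_entry summxE (bigD1 k) //= big1 ?addr0.
      by rewrite !mxE eqxx.
    by move=> t tk; rewrite !mxE eq_sym (negbTE tk) mulr0.
  rewrite e2 (phi_sum _ Hl); under eq_bigr do rewrite HZ.
  rewrite !mxE summxE; congr (_ * _); apply: eq_bigr => t _.
  by rewrite !mxE mulrC.
case: (boolP (X \in unitmx)) => XU; first by exists X.
exfalso.
have kX : kermx X != 0 by rewrite kermx_eq0 row_free_unit.
have [k yk] : exists k, row k (kermx X) != 0.
  case: (Classical_Prop.classic (exists k, row k (kermx X) != 0)) => // Hn.
  exfalso; move/negP: kX; apply; apply/eqP/row_matrixP => k; rewrite row0.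
  case: (eqVneq (row k (kermx X)) 0) => // h; exfalso; apply: Hn; by exists k.
set y := row k (kermx X).
have yX : y *m X = 0 by rewrite /y -row_mul mulmx_ker row0.
have yN : forall Y, y *m Y *m X = 0.
  move=> Y; have [M <-] := Hs Y.
  by rewrite -mulmxA HX -scalemxAr mulmxA yX mul0mx scaler0.
have [k' yk'] : exists k', y 0 k' != 0.
  case: (Classical_Prop.classic (exists k', y 0 k' != 0)) => // Hn.
  exfalso; move/negP: yk; apply; apply/eqP/rowP => b; rewrite [RHS]mxE.
  case: (eqVneq (y 0 b) 0) => // h; exfalso; apply: Hn; by exists b.
have Xz : forall r j, X r j = 0.
  move=> r j; have := congr1 (fun Z : 'M[C]_(1, m) => Z 0 j) (yN (delta_mx k' r)); simpl.
  have -> : y *m delta_mx k' r = y 0 k' *: delta_mx 0 r.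
    by apply/matrixP => a b; rewrite dr_entry ord1 !mxE eqxx.
  rewrite -scalemxAl [LHS]mxE dl_entry eqxx mul1r [RHS]mxE => /eqP.
  by rewrite mulf_eq0 (negbTE yk') /= => /eqP.
by move: Ppq; have := Xz p i0; rewrite mxE => ->; rewrite eqxx.
Qed.


Lemma bimod (G : 'M[C]_m -> 'M[C]_m) (A0 B0 Aj Bj : 'M[C]_m) (p q : 'I_m) :
  (forall x M1 M2, G (x *: M1 + M2) = x *: G M1 + G M2) ->
  (forall M1 M2, G (M1 *m A0 *m M2) = M1 *m B0 *m M2) ->
  G Aj = Bj -> A0 p q != 0 ->
  Bj = (B0 p q / A0 p q) *: Aj.
Proof.
move=> Hl HG <- a0.
have HZ := phiZ Hl.
have EA : Aj = \sum_r \sum_z (Aj r z / A0 p q) *: (delta_mx r p *m A0 *m delta_mx q z).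
  rewrite {1}(matrix_sum_delta Aj); apply: eq_bigr => r _; apply: eq_bigr => z _.
  by rewrite dBd scalerA mulfVK.
rewrite {1}EA (phi_sum _ Hl); under eq_bigr do rewrite (phi_sum _ Hl).
rewrite [in RHS](matrix_sum_delta Aj) scaler_sumr; apply: eq_bigr => r _.
rewrite scaler_sumr; apply: eq_bigr => z _.
rewrite HZ HG dBd !scalerA; congr (_ *: _); rewrite mulrAC [RHS]mulrAC; congr (_ * _); exact: mulrC.
Qed.


Lemma adjM m1 n1 p1 (X : 'M[C]_(m1, n1)) (Y : 'M[C]_(n1, p1)) :
  (X *m Y)^t* = Y^t* *m X^t*.
Proof. by rewrite trmx_mul map_mxM. Qed.

Lemma psum0 (I : finType) (F : I -> C) :
  (forall i, 0 <= F i) -> \sum_i F i = 0 -> forall i, F i = 0.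
Proof. by move=> H1 H2 i; apply: (psumr_eq0P _ H2) => // j _; exact: H1. Qed.

Lemma quad_inv (A : 'I_N -> 'M[C]_m) (Q P : 'M[C]_m) (e : 'rV[C]_m) :
  Q = P^t* *m diag_mx e *m P -> (forall k, 0 <= e 0 k) ->
  \sum_i A i *m Q *m (A i)^t* = Q ->
  forall y : 'rV[C]_m, y *m Q = 0 -> forall i, y *m A i *m Q = 0.
Proof.
move=> HQ He HE y yQ i0.
pose z i := y *m A i *m P^t*.
have Hz : forall i, (y *m A i *m Q *m (y *m A i)^t*) 0 0 =
    \sum_k e 0 k * (z i 0 k * (z i 0 k)^*).
  move=> i.
  have -> : y *m A i *m Q *m (y *m A i)^t* = z i *m diag_mx e *m (z i)^t*.
    by rewrite /z !adjM trmxCK HQ !mulmxA.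
  rewrite mul_mx_diag mxE; apply: eq_bigr => k _.
  by rewrite !mxE mulrCA mulrA.
have Hs : \sum_i (y *m A i *m Q *m (y *m A i)^t*) 0 0 = 0.
  rewrite -summxE.
  have -> : \sum_i y *m A i *m Q *m (y *m A i)^t* = y *m (\sum_i A i *m Q *m (A i)^t*) *m y^t*.
    rewrite mulmx_sumr mulmx_suml; apply: eq_bigr => i _.
    by rewrite adjM !mulmxA.
  by rewrite HE yQ mul0mx mxE.
have Hge : forall i k, 0 <= e 0 k * (z i 0 k * (z i 0 k)^*).
  by move=> i k; rewrite mulr_ge0 ?mul_conjC_ge0.
have H0 : forall i, \sum_k e 0 k * (z i 0 k * (z i 0 k)^*) = 0.
  apply: psum0 => [i|].
    by apply: sumr_ge0 => k _; exact: Hge.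
  by rewrite -[RHS]Hs; apply: eq_bigr => i _; rewrite Hz.
have H1 : forall k, e 0 k * z i0 0 k = 0.
  move=> k; have := psum0 (fun k => Hge i0 k) (H0 i0) k.
  move/eqP; rewrite mulf_eq0 mul_conjC_eq0 => /orP [/eqP -> | /eqP ->]; by rewrite ?mul0r ?mulr0.
have Hzd : z i0 *m diag_mx e = 0.
  by apply/matrixP => a k; rewrite mul_mx_diag mxE [RHS]mxE ord1 mulrC H1.
have -> : y *m A i0 *m Q = z i0 *m diag_mx e *m P by rewrite HQ /z !mulmxA.
by rewrite Hzd mul0mx.
Qed.


Lemma exists_max (f : 'I_m -> C) (i0 : 'I_m) :
  (forall k, f k \is Num.real) -> exists j, forall k, f k <= f j.
Proof.
move=> Hr.
suff : forall sq : seq 'I_m, exists j, forall k, k \in sq -> f k <= f j.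
  by move=> /(_ (enum 'I_m)) [j Hj]; exists j => k; apply: Hj; rewrite mem_enum.
elim => [|x sq [j Hj]]; first by exists i0.
case/orP: (real_leVge (Hr x) (Hr j)) => h.
  exists j => k; rewrite inE => /orP [/eqP -> //|]; exact: Hj.
exists x => k; rewrite inE => /orP [/eqP -> //|/Hj hk]; exact: le_trans hk h.
Qed.

Lemma rowvec_nz (y : 'rV[C]_m) : y != 0 -> exists k, y 0 k != 0.
Proof.
move=> yn; case: (Classical_Prop.classic (exists k, y 0 k != 0)) => // Hn.
exfalso; move/negP: yn; apply; apply/eqP/rowP => b; rewrite [RHS]mxE.
case: (eqVneq (y 0 b) 0) => // h; exfalso; apply: Hn; by exists b.
Qed.

Lemma kill_right (y : 'rV[C]_m) (Q : 'M[C]_m) :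
  y != 0 -> (forall M, y *m M *m Q = 0) -> Q = 0.
Proof.
move=> /rowvec_nz [k yk] H; apply/row_matrixP => r; rewrite row0 rowE.
have := H (delta_mx k r).
have -> : y *m delta_mx k r = y 0 k *: delta_mx 0 r.
  by apply/matrixP => a b; rewrite dr_entry ord1 !mxE eqxx.
rewrite -scalemxAl => /eqP; rewrite scaler_eq0 (negbTE yk) /=; by move/eqP.
Qed.

Lemma PF (A : 'I_N -> 'M[C]_m) L (Y : 'M[C]_m) (i0 : 'I_m) :
  spanL A L -> \sum_i A i *m (A i)^t* = 1%:M -> Y^t* = Y ->
  \sum_i A i *m Y *m (A i)^t* = Y -> exists mu, Y = mu *: 1%:M.
Proof.
move=> Hsp HA HY HE.
have Yh : Y \is hermsymmx by apply/is_hermitianmxP; rewrite expr0 scale1r HY.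
have /orthomx_spectralP HYd := hermitian_normalmx Yh.
set P := spectralmx Y in HYd; set d := spectral_diag Y in HYd.
have Pu : P \is unitarymx := spectral_unitarymx Y.
have PU : P \in unitmx := spectral_unit Y.
have dr : forall k, d 0 k \is Num.real.
  by move=> k; have /mxOverP := hermitian_spectral_diag_real Yh; apply.
have [j Hj] := @exists_max (fun k => d 0 k) i0 dr.
set mu := d 0 j.
pose e := \row_k (mu - d 0 k).
pose Q := mu *: 1%:M - Y.
have De : diag_mx e = mu *: 1%:M - diag_mx d.
  apply/matrixP => a b; rewrite !mxE; case: (eqVneq a b) => [->|ab].
    by rewrite !mulr1n mulr1.
  by rewrite !mulr0n mulr0 subr0.
have HQ : Q = P^t* *m diag_mx e *m P.
  rewrite /Q {1}HYd invmx_unitary // De mulmxBr mulmxBl -scalemxAr mulmx1.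
  by rewrite -scalemxAl -invmx_unitary // mulVmx.
have He : forall k, 0 <= e 0 k by move=> k; rewrite mxE subr_ge0; exact: Hj.
have HEQ : \sum_i A i *m Q *m (A i)^t* = Q.
  rewrite /Q; under eq_bigr do rewrite mulmxBr mulmxBl -scalemxAr mulmx1 -scalemxAl.
  by rewrite sumrB -scaler_sumr HA HE.
set y := row j P.
have yQ : y *m Q = 0.
  have PP : P *m P^t* = 1%:M by apply/unitarymxP.
  rewrite HQ /y rowE !mulmxA -[delta_mx 0 j *m P *m _]mulmxA PP mulmx1 -rowE row_diag_mx.
  by rewrite mxE /mu subrr scale0r mul0mx.
have Hw : forall w (y' : 'rV[C]_m), y' *m Q = 0 -> y' *m wp A w *m Q = 0.
  elim => [|i w IH] y' Hy /=; first by rewrite mulmx1.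
  by rewrite mulmxA IH // (quad_inv HQ He HEQ Hy).
have HM : forall M, y *m M *m Q = 0.
  move=> M; have [t [_ <-]] := Hsp M.
  rewrite /lc mulmx_sumr mulmx_suml big1 // => p _.
  by rewrite -scalemxAr -scalemxAl Hw // scaler0.
have yn : y != 0.
  apply/negP => /eqP y0.
  have : y *m P^t* = delta_mx 0 j.
    by rewrite /y -row_mul (unitarymxP Pu) row1.
  rewrite y0 mul0mx => /matrixP /(_ 0 j); rewrite !mxE !eqxx /= => /eqP.
  by rewrite eq_sym oner_eq0.
have Q0 := kill_right yn HM.
by exists mu; apply/eqP; rewrite eq_sym -subr_eq0 -/Q Q0.
Qed.


Lemma lc_single A i : lc A [:: (1, [:: i])] = A i.
Proof. by rewrite /lc big_cons big_nil addr0 scale1r /= mulmx1. Qed.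

Lemma mat1_nz (i0 : 'I_m) : (1%:M : 'M[C]_m) != 0.
Proof.
apply/negP => /eqP /matrixP /(_ i0 i0); rewrite !mxE eqxx /= => /eqP.
by rewrite oner_eq0.
Qed.

Lemma wp_conj A At (X Xi : 'M[C]_m) (lam : C) :
  X *m Xi = 1%:M -> Xi *m X = 1%:M ->
  (forall i, At i = lam *: (X *m A i *m Xi)) ->
  forall w, wp At w = lam ^+ size w *: (X *m wp A w *m Xi).
Proof.
move=> H1 H2 HA; elim => [|i w IH] /=; first by rewrite expr0 scale1r mulmx1 H1.
rewrite HA IH -scalemxAl -scalemxAr scalerA exprS.
by rewrite !mulmxA -[X *m A i *m Xi *m X]mulmxA H2 mulmx1.
Qed.

Lemma some_nz A (i0 : 'I_m) : \sum_i A i *m (A i)^t* = 1%:M ->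
  exists j p q, A j p q != 0.
Proof.
move=> HA; case: (Classical_Prop.classic (exists j p q, A j p q != 0)) => // Hn.
exfalso; move/negP: (mat1_nz i0); apply; apply/eqP; rewrite -HA big1 // => i _.
have -> : A i = 0.
  apply/matrixP => p q; rewrite mxE.
  case: (eqVneq (A i p q) 0) => // h; exfalso; apply: Hn; by exists i, p, q.
by rewrite mul0mx.
Qed.


Lemma adjZ m1 n1 (a : C) (X : 'M[C]_(m1, n1)) : (a *: X)^t* = a^* *: X^t*.
Proof. by apply/matrixP => i j; rewrite !mxE rmorphM. Qed.

Lemma sandwich (X Xi W : 'M[C]_m) : Xi *m X = 1%:M ->
  Xi *m (X *m W *m Xi) *m X = W.
Proof. by move=> H; rewrite !mulmxA H mul1mx -mulmxA H mulmx1. Qed.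

Lemma sandwich1 (G : 'M[C]_m -> 'M[C]_m) (a b : 'M[C]_m) :
  (forall M1 M2, G (M1 *m a *m M2) = M1 *m b *m M2) -> G a = b.
Proof. by move=> H; have := H 1%:M 1%:M; rewrite mul1mx !mulmx1 mul1mx. Qed.

Lemma unsandwich (X Xi W : 'M[C]_m) : X *m Xi = 1%:M ->
  X *m (Xi *m W *m X) *m Xi = W.
Proof. by move=> H; rewrite !mulmxA H mul1mx -mulmxA H mulmx1. Qed.

Lemma conj_sq (X Xi V : 'M[C]_m) : X *m Xi = 1%:M -> V *m V = 1%:M ->
  Xi *m X = 1%:M -> Xi *m V *m X *m (Xi *m V *m X) = 1%:M.
Proof.
move=> H1 H2 H3.
by rewrite !mulmxA -[Xi *m V *m X *m Xi]mulmxA H1 mulmx1 -[Xi *m V *m V]mulmxA H2 mulmx1.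
Qed.

Lemma adj1 : (1%:M : 'M[C]_m)^t* = 1%:M.
Proof. by rewrite trmx1 map_mx1. Qed.

Lemma conj_back (X Xi S : 'M[C]_m) : Xi *m X = 1%:M ->
  X *m S *m X^t* = 1%:M -> S = Xi *m Xi^t*.
Proof.
move=> H1 H2.
have H3 : X^t* *m Xi^t* = 1%:M by rewrite -adjM H1 adj1.
have -> : S = Xi *m (X *m S *m X^t*) *m Xi^t*.
  by rewrite !mulmxA H1 mul1mx -mulmxA H3 mulmx1.
by rewrite H2 mulmx1.
Qed.

Lemma forward (A At : 'I_N -> 'M[C]_m) (u ut : 'M[C]_m) (i0 : 'I_m) lA lAt :
  spanL A lA -> spanL At lAt ->
  \sum_i A i *m (A i)^t* = 1%:M -> \sum_i At i *m (At i)^t* = 1%:M ->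
  u *m u = 1%:M -> ut *m ut = 1%:M ->
  (forall L, exists ph : C, `|ph| = 1 /\ forall w, size w = L ->
      \tr (u *m wp A w) = ph * \tr (ut *m wp At w)) ->
  exists V b, V \is unitarymx /\ `|b| = 1 /\
     forall i, At i = b *: (V^t* *m A i *m V).
Proof.
move=> SA0 SAt0 HcA HcAt Hu Hut H.
pose K := (lA + lAt).+1.
have SA : forall L, (lA <= L)%N -> spanL A L := fun L h => span_ge HcA SA0 h.
have SAt : forall L, (lAt <= L)%N -> spanL At L := fun L h => span_ge HcAt SAt0 h.
have lAK : (lA <= K)%N by rewrite /K ltnW // ltnS leq_addr.
have SAK : spanL A K by apply: SA.
have SAtK : spanL At K by apply: SAt; rewrite /K ltnW // ltnS leq_addl.
have Hinv : forall L, exists ph' : C, forall w, size w = L ->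
    \tr (ut *m wp At w) = ph' * \tr (u *m wp A w).
  move=> L; have [ph [Hph HL]] := H L; exists ph^-1 => w hw.
  have ph0 : ph != 0.
    by apply/negP => /eqP ph0; move: Hph; rewrite ph0 normr0 => /eqP; rewrite eq_sym oner_eq0.
  by rewrite HL // mulKf.
have KLL : forall L s, wl L s -> lc A s = 0 -> lc At s = 0.
  move=> L; have [ph' Hph'] := Hinv (L + K)%N.
  exact: (KL Hut SAtK Hph').
have PhiE : forall L, (lA <= L)%N -> exists Phi : 'M[C]_m -> 'M[C]_m,
    forall s, wl L s -> Phi (lc A s) = lc At s.
  by move=> L hL; apply: phi_ex; [exact: SA | exact: KLL].
have [psi Hpsi] := PhiE K lAK.
have [Phi2 HPhi2] := PhiE (K + K)%N (leq_trans lAK (leq_addr _ _)).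
have lA3 : (lA <= K + 1 + K)%N by apply: (leq_trans lAK); rewrite -addnA leq_addr.
have [Phi3 HPhi3] := PhiE (K + 1 + K)%N lA3.
have Lpsi := phi_lin SAK Hpsi.
have Lphi3 := phi_lin (SA _ lA3) HPhi3.
have psiS : forall Y, exists M, psi M = Y.
  by move=> Y; have [t [wt <-]] := SAtK Y; exists (lc A t); exact: Hpsi.
have H2 : forall M1 M2, Phi2 (M1 *m M2) = psi M1 *m psi M2.
  move=> M1 M2; have [s1 [w1 <-]] := SAK M1; have [s2 [w2 <-]] := SAK M2.
  by rewrite -lc_prods HPhi2 ?wl_prods // lc_prods !Hpsi.
pose Q := psi 1%:M.
have HQ : forall Y, Q *m Y = Y *m Q.
  move=> Y; have [M <-] := psiS Y.
  by rewrite -H2 mul1mx -[M in Phi2 M]mulmx1 H2.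
pose c := Q i0 i0.
have Qc : Q = c *: 1%:M := comm_scalar i0 HQ.
have Hm : forall M1 M2, psi M1 *m psi M2 = c *: psi (M1 *m M2).
  by move=> M1 M2; rewrite -H2 -[M1 *m M2]mul1mx H2 -/Q Qc -scalemxAl !mul1mx.
have c0 : c != 0.
  apply/negP => /eqP c0.
  have [M1 HM1] := psiS 1%:M.
  have := Hm M1 M1; rewrite HM1 mulmx1 c0 scale0r => /eqP; apply/negP; exact: mat1_nz.
have [X [XU HX]] := @auto_inner psi c i0 Lpsi psiS Hm c0 Qc.
pose Xi : 'M[C]_m := invmx X.
have XXi : X *m Xi = 1%:M by rewrite mulmxV.
have XiX : Xi *m X = 1%:M by rewrite mulVmx.
have psiE : forall M, psi M = c *: (X *m M *m Xi).
  by move=> M; rewrite -[psi M]mulmx1 -XXi mulmxA HX -scalemxAl.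
have H3 : forall i M1 M2, Phi3 (M1 *m A i *m M2) = psi M1 *m At i *m psi M2.
  move=> i M1 M2; have [s1 [w1 <-]] := SAK M1; have [s2 [w2 <-]] := SAK M2.
  rewrite -(lc_single A i) -!lc_prods HPhi3; last first.
    by apply: wl_prods => //; apply: wl_prods.
  by rewrite !lc_prods lc_single !Hpsi.
pose G M := (c ^+ 2)^-1 *: (Xi *m Phi3 M *m X).
have LG : forall x M1 M2, G (x *: M1 + M2) = x *: G M1 + G M2.
  move=> x M1 M2; rewrite /G Lphi3 mulmxDr mulmxDl -scalemxAr -scalemxAl scalerDr.
  by rewrite !scalerA mulrC.
pose B i := Xi *m At i *m X.
have HG : forall i M1 M2, G (M1 *m A i *m M2) = M1 *m B i *m M2.
  move=> i M1 M2; rewrite /G H3.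
  have -> : psi M1 *m At i *m psi M2 = c ^+ 2 *: (X *m (M1 *m B i *m M2) *m Xi).
    rewrite !psiE /B -!scalemxAl -!scalemxAr scalerA -expr2; congr (_ *: _).
    by rewrite !mulmxA.
  rewrite -scalemxAr -scalemxAl scalerA mulVf ?expf_neq0 // scale1r.
  exact: sandwich.
have GA : forall j, G (A j) = B j.
  by move=> j; apply: sandwich1; exact: HG.
have [j0 [p [q Apq]]] := some_nz i0 HcA.
pose lam := B j0 p q / A j0 p q.
have HB : forall j, B j = lam *: A j := fun j => bimod LG (HG j0) (GA j) Apq.
have HAt : forall j, At j = lam *: (X *m A j *m Xi).
  move=> j; have : X *m B j *m Xi = At j.
    exact: unsandwich.
  by rewrite HB -scalemxAr -scalemxAl => <-.
have Hwp := wp_conj XXi XiX HAt.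
have [ph [Hph HK]] := H K.
pose kap := ph * lam ^+ K.
have Huu : u = kap *: (Xi *m ut *m X).
  apply/eqP; rewrite -subr_eq0; apply/eqP; apply: nondeg => M.
  have [t [wt <-]] := SAK M.
  have TLh : forall w, size w = K ->
      \tr (u *m wp A w) = 1 * \tr ((kap *: (Xi *m ut *m X)) *m wp A w).
    move=> w hw; rewrite mul1r HK // Hwp hw.
    rewrite -scalemxAr mxtraceZ -scalemxAl mxtraceZ /kap mulrA; congr (_ * _).
    by rewrite !mulmxA mxtrace_mulC !mulmxA.
  by rewrite mulmxBl linearB /= (TL TLh wt) mul1r subrr.
have kap2 : kap ^+ 2 = 1.
  have := Hu; rewrite {1 2}Huu -scalemxAl -scalemxAr scalerA -expr2.
  have -> : Xi *m ut *m X *m (Xi *m ut *m X) = 1%:M.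
    exact: conj_sq.
  move=> /(congr1 (fun Z : 'M[C]_m => Z i0 i0)); rewrite /= !mxE eqxx mulr1.
  by [].
have lam1 : `|lam| = 1.
  have : `|kap| ^+ 2 = 1 by rewrite -normrX kap2 normr1.
  move/eqP; rewrite pexpr_eq1 // => /eqP; rewrite /kap normrM Hph mul1r normrX => /eqP.
  by rewrite pexpr_eq1 // => /eqP.
pose Y := Xi *m Xi^t*.
have YH : Y^t* = Y by rewrite /Y adjM trmxCK.
have HEY : \sum_i A i *m Y *m (A i)^t* = Y.
  apply: (conj_back XiX); rewrite -HcAt mulmx_sumr mulmx_suml; apply: eq_bigr => i _.
  rewrite HAt adjZ -scalemxAl -scalemxAr scalerA -normCK lam1 expr1n scale1r.
  by rewrite !adjM /Y !mulmxA.
have [mu Ymu] := PF i0 SAK HcA YH HEY.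
have XY : X *m Y = Xi^t* by rewrite /Y mulmxA XXi mul1mx.
have XiT : Xi^t* = mu *: X by rewrite -XY Ymu -scalemxAr mulmx1.
have mu_ge0 : 0 <= mu.
  have : Y i0 i0 = mu by rewrite Ymu !mxE eqxx mulr1.
  move=> <-; rewrite /Y mxE; apply: sumr_ge0 => k _; rewrite !mxE; exact: mul_conjC_ge0.
have mu0 : mu != 0.
  apply/negP => /eqP mu0.
  have Xi0 : Xi = 0.
    by rewrite -[Xi]trmxCK XiT mu0 scale0r trmx0 map_mx0.
  by move: XXi; rewrite Xi0 mulmx0 => /eqP; rewrite eq_sym (negbTE (mat1_nz i0)).
pose sq := sqrtC mu.
have sq_ge0 : 0 <= sq by rewrite sqrtC_ge0.
have sq0 : sq != 0 by rewrite sqrtC_eq0.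
have sq2 : sq * sq = mu by rewrite -expr2 sqrtCK.
have sqc : sq^* = sq := geC0_conj sq_ge0.
have sqi : (sq^-1)^* = sq^-1 by rewrite fmorphV /= sqc.
pose V := sq^-1 *: Xi.
exists V, lam; split; [|split=> //].
  apply/unitarymxP; rewrite /V adjZ -scalemxAl -scalemxAr scalerA -/Y Ymu scalerA sqi.
  by rewrite -sq2 -invfM mulVf ?mulf_neq0 // scale1r.
move=> i; rewrite HAt /V adjZ sqi XiT; congr (_ *: _).
rewrite -!scalemxAl -scalemxAr !scalerA -sq2 mulrA mulVf // mul1r mulfV // scale1r.
by [].
Qed.


Lemma unit_both (V : 'M[C]_m) : V \is unitarymx ->
  V *m V^t* = 1%:M /\ V^t* *m V = 1%:M.
Proof.
move=> Vu; split; first exact/unitarymxP.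
by rewrite -invmx_unitary // mulVmx // unitarymx_unit.
Qed.

Lemma trconj (Vt V u W : 'M[C]_m) : V *m Vt = 1%:M ->
  \tr (Vt *m u *m V *m (Vt *m W *m V)) = \tr (u *m W).
Proof.
move=> H; rewrite !mulmxA -[Vt *m u *m V *m Vt]mulmxA H mulmx1.
by rewrite mxtrace_mulC !mulmxA H mul1mx.
Qed.

Lemma backward A At (V u : 'M[C]_m) (b : C) :
  V \is unitarymx -> `|b| = 1 -> (forall i, At i = b *: (V^t* *m A i *m V)) ->
  forall w, \tr (u *m wp A w) = (b^*) ^+ size w * \tr ((V^t* *m u *m V) *m wp At w).
Proof.
move=> Vu b1 HA w; have [H1 H2] := unit_both Vu.
rewrite (wp_conj H2 H1 HA) -scalemxAr mxtraceZ mulrA -exprMn [b^* * b]mulrC -normCK b1.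
by rewrite !expr1n mul1r trconj.
Qed.


Lemma twist A (x y : C) (T : 'M[C]_m) :
  (forall i, x *: (A i *m T) = y *: (T *m A i)) ->
  forall w, x ^+ size w *: (wp A w *m T) = y ^+ size w *: (T *m wp A w).
Proof.
move=> H; elim => [|i w IH] /=; first by rewrite !expr0 !scale1r mul1mx mulmx1.
have -> : x ^+ (size w).+1 *: (A i *m wp A w *m T) = x *: (A i *m (x ^+ size w *: (wp A w *m T))).
  by rewrite -scalemxAr scalerA -exprS mulmxA.
rewrite IH.
have -> : x *: (A i *m (y ^+ size w *: (T *m wp A w))) = y ^+ size w *: ((x *: (A i *m T)) *m wp A w).
  by rewrite -scalemxAr scalerA mulrC -scalerA -scalemxAl mulmxA.
by rewrite H -scalemxAl scalerA -exprSr mulmxA.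
Qed.

Lemma twist_span A L (x y : C) (T : 'M[C]_m) :
  spanL A L -> (forall i, x *: (A i *m T) = y *: (T *m A i)) ->
  forall M, x ^+ L *: (M *m T) = y ^+ L *: (T *m M).
Proof.
move=> Hs H M; have [s [/allP ws <-]] := Hs M.
rewrite /lc mulmx_suml mulmx_sumr !scaler_sumr; apply: eq_big_seq => p ps.
rewrite -scalemxAl -scalemxAr !scalerA mulrC [y ^+ L * _]mulrC -!scalerA.
by rewrite -(eqP (ws _ ps)) (twist H).
Qed.

Lemma comm_span A L (T : 'M[C]_m) (i0 : 'I_m) :
  spanL A L -> (forall i, A i *m T = T *m A i) -> T = T i0 i0 *: 1%:M.
Proof.
move=> Hs H; apply: comm_scalar => M.
have H' : forall i, 1 *: (A i *m T) = 1 *: (T *m A i) by move=> i; rewrite H.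
by have := twist_span Hs H' M; rewrite !expr1n !scale1r.
Qed.


Lemma relX (V V' A0 : 'M[C]_m) (b b' : C) :
  V *m V^t* = 1%:M -> V' *m V'^t* = 1%:M ->
  b *: (V^t* *m A0 *m V) = b' *: (V'^t* *m A0 *m V') ->
  b *: (A0 *m (V *m V'^t*)) = b' *: (V *m V'^t* *m A0).
Proof.
move=> H1 H2 /(congr1 (fun Z => V *m Z *m V'^t*)) /=.
rewrite -!scalemxAr -!scalemxAl.
rewrite !mulmxA H1 mul1mx -[V *m V'^t* *m A0 *m V' *m V'^t*]mulmxA H2 mulmx1.
by [].
Qed.

Lemma uniq_rel A L (V V' : 'M[C]_m) (b b' : C) (i0 : 'I_m) :
  spanL A L -> \sum_i A i *m (A i)^t* = 1%:M ->
  V \is unitarymx -> V' \is unitarymx -> `|b| = 1 -> `|b'| = 1 ->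
  (forall i, b *: (V^t* *m A i *m V) = b' *: (V'^t* *m A i *m V')) ->
  b' = b /\ exists d : C, `|d| = 1 /\ V' = d *: V.
Proof.
move=> Hs HcA Vu V'u b1 b'1 Hb.
have [H1 H2] := unit_both Vu; have [H1' H2'] := unit_both V'u.
pose X := V *m V'^t*.
have HX : forall i, b *: (A i *m X) = b' *: (X *m A i) by move=> i; apply: relX.
have HXM := twist_span Hs HX.
have XX : X *m X^t* = 1%:M.
  by rewrite /X adjM trmxCK !mulmxA -[V *m V'^t* *m V']mulmxA H2' mulmx1 H1.
have X0 : X != 0.
  by apply/negP => /eqP X0; move: XX; rewrite X0 mul0mx => /eqP; rewrite eq_sym (negbTE (mat1_nz i0)).
have bn : b != 0 by apply/negP => /eqP b0; move: b1; rewrite b0 normr0 => /eqP; rewrite eq_sym oner_eq0.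
have bL : b ^+ L = b' ^+ L.
  have := HXM 1%:M; rewrite mul1mx mulmx1 => /eqP; rewrite -subr_eq0 -scalerBl scaler_eq0 (negbTE X0) orbF subr_eq0.
  by move/eqP.
have Xc : X = X i0 i0 *: 1%:M.
  apply: comm_scalar => M; apply: (@scalerI _ _ (b ^+ L)); first by rewrite expf_neq0.
  by rewrite HXM bL.
set d := X i0 i0 in Xc.
have d0 : d != 0 by apply/negP => /eqP d0; move: X0; rewrite Xc d0 scale0r eqxx.
have [j [p [q Ajpq]]] := some_nz i0 HcA.
have bb : b' = b.
  have := HX j; rewrite Xc -scalemxAr mulmx1 -scalemxAl mul1mx !scalerA.
  move=> /(congr1 (fun Z : 'M[C]_m => Z p q)); rewrite /= !mxE => /(mulIf Ajpq) /(mulIf d0).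
  by move->.
split => //.
have dd : d * d^* = 1.
  move: XX; rewrite Xc adjZ adj1 -scalemxAl mul1mx scalerA.
  move=> /(congr1 (fun Z : 'M[C]_m => Z i0 i0)); rewrite /= !mxE eqxx mulr1.
  by [].
exists d^*; split.
  by rewrite norm_conjC; apply/eqP; rewrite -(@pexpr_eq1 _ _ 2) // normCK dd.
have : V^t* *m X = V'^t* by rewrite /X mulmxA H2 mul1mx.
rewrite Xc -scalemxAr mulmx1 => /(congr1 (fun Z => Z^t*)); rewrite adjZ !trmxCK.
by move->.
Qed.


Lemma pm1 (x : C) : (x = 1 \/ x = -1) <-> x ^+ 2 = 1.
Proof.
split; first by case=> ->; rewrite ?expr1n ?sqrrN ?expr1n.
by move/eqP; rewrite sqrf_eq1 => /orP [/eqP -> | /eqP ->]; [left|right].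
Qed.

Lemma comm_grad (Z1 Z2 M Nn : 'M[C]_m) : Z1 *m Z1 = 1%:M -> Z2 *m Z2 = 1%:M ->
  Z1 *m M *m Z1 = Nn -> Z2 *m M *m Z2 = Nn -> Z1 *m Z2 *m M = M *m (Z1 *m Z2).
Proof.
move=> H1 H2 E1 E2.
have -> : Z1 *m Z2 *m M = Z1 *m Nn *m Z2.
  by rewrite -E2 -[Z1 *m Z2 *m M]mulmx1 -H2 !mulmxA.
by rewrite -E1 -[M *m (Z1 *m Z2)]mul1mx -H1 !mulmxA.
Qed.

Lemma grad_conj A At (sg : 'I_N -> C) (V Z : 'M[C]_m) (b : C) :
  V \is unitarymx -> (forall i, At i = b *: (V^t* *m A i *m V)) ->
  (forall i, sg i *: A i = Z *m A i *m Z) ->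
  forall i, sg i *: At i = (V^t* *m Z *m V) *m At i *m (V^t* *m Z *m V).
Proof.
move=> Vu HA HZ i; have [H1 H2] := unit_both Vu.
rewrite HA -scalemxAr -scalemxAl scalerA mulrC -scalerA; congr (_ *: _).
rewrite !mulmxA -[V^t* *m Z *m V *m V^t*]mulmxA H1 mulmx1.
rewrite -[V^t* *m Z *m A i *m V *m V^t*]mulmxA H1 mulmx1.
have -> : V^t* *m Z *m A i *m Z *m V = V^t* *m (Z *m A i *m Z) *m V by rewrite !mulmxA.
by rewrite -HZ -scalemxAr -scalemxAl.
Qed.

Lemma walls A At (sg : 'I_N -> C) (V Z Zt u ut : 'M[C]_m) (b : C) L (i0 : 'I_m) :
  spanL At L -> V \is unitarymx -> (forall i, At i = b *: (V^t* *m A i *m V)) ->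
  Z *m Z = 1%:M -> Zt *m Zt = 1%:M ->
  (forall i, sg i *: A i = Z *m A i *m Z) -> (forall i, sg i *: At i = Zt *m At i *m Zt) ->
  (u = Z \/ u = - Z) -> (ut = Zt \/ ut = - Zt) ->
  exists eta : C, (eta = 1 \/ eta = -1) /\ ut = eta *: (V^t* *m u *m V).
Proof.
move=> Hs Vu HA HZ HZt GA GAt hu hut.
have [H1 H2] := unit_both Vu.
pose Z' := V^t* *m Z *m V.
have Z'2 : Z' *m Z' = 1%:M.
  by rewrite /Z' !mulmxA -[V^t* *m Z *m V *m V^t*]mulmxA H1 mulmx1 -[V^t* *m Z *m Z]mulmxA HZ mulmx1.
have GZ' := grad_conj Vu HA GA.
pose T := Zt *m Z'.
have HT : forall i, At i *m T = T *m At i.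
  by move=> i; rewrite /T (comm_grad HZt Z'2 (esym (GAt i)) (esym (GZ' i))).
have Tc := comm_span i0 Hs HT.
set d := T i0 i0 in Tc.
have ZtZ : Zt = d *: Z'.
  by rewrite -[Zt]mulmx1 -Z'2 mulmxA -/T Tc -scalemxAl mul1mx.
have d2 : d ^+ 2 = 1.
  move: HZt; rewrite ZtZ -scalemxAl -scalemxAr scalerA -expr2 Z'2.
  move=> /(congr1 (fun W : 'M[C]_m => W i0 i0)); rewrite /= !mxE eqxx mulr1.
  by [].
have [eu [eu1 Zu]] : exists eu : C, eu ^+ 2 = 1 /\ Z = eu *: u.
  case: hu => ->; first by exists 1; rewrite expr1n scale1r.
  by exists (-1); rewrite sqrrN expr1n scaleN1r opprK.
have [et [et1 ute]] : exists et : C, et ^+ 2 = 1 /\ ut = et *: Zt.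
  case: hut => ->; first by exists 1; rewrite expr1n scale1r.
  by exists (-1); rewrite sqrrN expr1n scaleN1r.
exists (et * d * eu); split.
  by apply/pm1; rewrite !exprMn et1 d2 eu1 !mul1r.
rewrite ute ZtZ /Z' Zu -scalemxAr -scalemxAl !scalerA.
by [].
Qed.

End Gen.

Section Fin.
Variable C : numClosedFieldType.
Variables (n N : nat).
Variable par : 'I_N -> bool.

Lemma sigmaz_sq : sigmaz_id C n *m sigmaz_id C n = 1%:M.
Proof.
rewrite /sigmaz_id mulmx_block !mulmx0 !mul0mx !addr0 !add0r mulmx1 mulNmx mulmxN mulmx1 opprK.
by rewrite -scalar_mx_block.
Qed.

Lemma grading_sq (Z : 'M[C]_(n + n)) : grading_like Z -> Z *m Z = 1%:M.
Proof.
case=> W [Wu ->]; have [H1 H2] := unit_both Wu.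
rewrite !mulmxA -[W *m sigmaz_id C n *m W^t* *m W]mulmxA H2 mulmx1.
by rewrite -[W *m sigmaz_id C n *m sigmaz_id C n]mulmxA sigmaz_sq mulmx1 H1.
Qed.

Lemma grading_conj (V Z : 'M[C]_(n + n)) : V \is unitarymx -> grading_like Z ->
  grading_like (V^t* *m Z *m V).
Proof.
move=> Vu [W [Wu ->]]; exists (V^t* *m W); split.
  by rewrite mul_unitarymx // trmxC_unitary.
by rewrite adjM trmxCK !mulmxA.
Qed.

Lemma inj_span (A : 'I_N -> 'M[C]_(n + n)) : injective_plus A -> exists l, spanL A l.
Proof.
case=> l Hl; exists l => M; have [c Hc] := Hl M.
exists [seq (c w, tval w) | w <- index_enum {: l.-tuple 'I_N}]; split.
  by apply/allP => p /mapP [w _ ->] /=; rewrite size_tuple.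
by rewrite Hc /lc big_map.
Qed.

End Fin.

Unset Implicit Arguments.
Set Strict Implicit.

Theorem mainTheorem1 (R : realType) (n N : nat) (par : 'I_N -> bool)
    (A At : 'I_N -> 'M[R[i]]_(n + n)) :
  (1 <= n)%N -> (1 <= N)%N ->
  is_fMPS par A -> is_fMPS par At ->
  canonical_fMPS A -> canonical_fMPS At ->
  injective_plus A -> injective_plus At ->
  (* existence: both gauge equivalences are characterized *)
  (gauge_equiv A At <-> exists V b, unit_related A At V b) /\
  (gauge_equiv_PBC par A At <-> exists V b, unit_related A At V b) /\
  (* uniqueness: the phase is unique, V is unique up to a U(1) phase *)
  (forall V b V' b', unit_related A At V b -> unit_related A At V' b' ->
     b' = b /\ exists d : R[i], `|d| = 1 /\ V' = d *: V) /\
  (* Wall matrices *)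
  (forall V b, unit_related A At V b ->
     forall u ut, is_wall par A u -> is_wall par At ut ->
       exists eta : R[i], (eta = 1 \/ eta = -1) /\
         ut = eta *: (V^t* *m u *m V)).
Proof.
move=> n1 N1 [Z [GZ HZ]] [Zt [GZt HZt]] HcA HcAt IA IAt.
have i0 : 'I_(n + n) by apply: (@Ordinal _ 0); rewrite addn_gt0 n1.
have [lA SA] := inj_span IA; have [lAt SAt] := inj_span IAt.
have ZZ := grading_sq GZ; have ZZt := grading_sq GZt.
have bw : forall V b, unit_related A At V b -> forall (u : 'M[R[i]]_(n + n)) L,
    exists ph : R[i], `|ph| = 1 /\ forall w : L.-tuple 'I_N,
    \tr (u *m wprod A w) = ph * \tr ((V^t* *m u *m V) *m wprod At w).
  move=> V b [Vu [b1 HA]] u L; exists ((b^*) ^+ L); split.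
    by rewrite normrX norm_conjC b1 expr1n.
  by move=> w; rewrite (backward (At := At) u Vu b1 HA) size_tuple.
split; [|split; [|split]].
- split.
  + move=> HG; apply: (forward i0 SA SAt HcA HcAt (mul1mx 1%:M) (mul1mx 1%:M)).
    move=> L; have [ph [Hph HL]] := HG L; exists ph; split => // w hw.
    by rewrite !mul1mx; exact: (HL (@Tuple L _ w (introT eqP hw))).
  + move=> [V [b Hr]] L; have [ph [Hph HL]] := bw V b Hr 1%:M L.
    exists ph; split => // w; have := HL w.
    case: Hr => Vu _; have [_ H2] := unit_both Vu.
    by rewrite mulmx1 H2 !mul1mx.
- split.
  + move=> [u [ut [[Z1 [[GZ1 _] hu]] [[Z2 [[GZ2 _] hut]] HG]]]].
    have uu : u *m u = 1%:M.
      by case: hu => ->; rewrite ?mulNmx ?mulmxN ?opprK grading_sq.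
    have uut : ut *m ut = 1%:M.
      by case: hut => ->; rewrite ?mulNmx ?mulmxN ?opprK grading_sq.
    apply: (forward i0 SA SAt HcA HcAt uu uut).
    move=> L; have [ph [Hph HL]] := HG L; exists ph; split => // w hw.
    exact: (HL (@Tuple L _ w (introT eqP hw))).
  + move=> [V [b Hr]]; exists Z, (V^t* *m Z *m V).
    case: (Hr) => Vu [b1 HA].
    split; first by exists Z; split => //; left.
    split.
      exists (V^t* *m Z *m V); split; last by left.
      split; first exact: grading_conj.
      exact: (grad_conj Vu HA HZ).
    exact: bw Hr Z.
- move=> V b V' b' [Vu [b1 HA]] [V'u [b'1 HA']].
  apply: (uniq_rel i0 SA HcA Vu V'u b1 b'1) => i.
  by rewrite -HA -HA'.
- move=> V b [Vu [b1 HA]] u ut [Z1 [[GZ1 HZ1] hu]] [Z2 [[GZ2 HZ2] hut]].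
  exact: (walls i0 SAt Vu HA (grading_sq GZ1) (grading_sq GZ2) HZ1 HZ2 hu hut).
Qed.
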